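(* Work in a second-order (Bayes linear) belief framework in which $P(\cdot)$ denotes a (primitive) prevision/expectation specified for all quantities below, with variances and covariances $\mathrm{Var}$, $\mathrm{Cov}$ derived from it. For vectors of random quantities $X$ and $W$, define the adjusted expectation of $X$ by $W$ as $$P_W(X)=P(X)+\mathrm{Cov}(X,W)\,\mathrm{Var}(W)^{\dagger}\,\big(W-P(W)\big),$$ where $\dagger$ denotes the Moore–Penrose generalised inverse. Let $m\ge 1$ and $n_1,\dots,n_m\ge 1$, and let $\boldsymbol Z=\{Z_{ij}: i=1,\dots,m,\ j=1,\dots,n_i\}$ be random vectors (all of the same dimension as $X$) such that $Z_{ij}=\mu_i+\mathcal R_{ij}$, where $\mu_1,\dots,\mu_m$ are random vectors, each $\mathcal R_{ij}$ has $P(\mathcal R_{ij})=0$ and is uncorrelated with every $\mu_k$, the residuals $\mathcal R_{ij}$ and $\mathcal R_{kl}$ are uncorrelated for $(i,j)\ne(k,l)$, and $\mathrm{Var}(\mathcal R_{ij})$ does not depend on $j$. Write $\boldsymbol\mu=\mathrm{vec}(\mu_1,\dots,\mu_m)$. Suppose the quantity of interest $X$ satisfies $$X=\sum_{i=1}^m A_i\mu_i+\boldsymbol U=\boldsymbol{\mathcal A}\boldsymbol\mu+\boldsymbol U,$$ where $\boldsymbol{\mathcal A}=(A_1,\dots,A_m)$ is a known (constant) matrix and $\boldsymbol U$ is a random vector uncorrelated with all elements of all $\mu_i$ and all $\mathcal R_{ij}$. Then $$P_{\boldsymbol Z}(X)=P_{P_{\boldsymbol Z}(\boldsymbol\mu)}(X)=\boldsymbol{\mathcal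 A}\,P_{\boldsymbol Z}(\boldsymbol\mu)+P(\boldsymbol U).$$
   Context: $P_{\boldsymbol Z}(\boldsymbol\mu)$ denotes the adjusted expectation of $\boldsymbol\mu$ by the full collection $\boldsymbol Z$ (stacked into one vector), and $P_{P_{\boldsymbol Z}(\boldsymbol\mu)}(X)$ denotes the adjusted expectation of $X$ by the random vector $P_{\boldsymbol Z}(\boldsymbol\mu)$. The structure $Z_{ij}=\mu_i+\mathcal R_{ij}$ encodes second-order exchangeability of the members within each class $i$ (with class mean $\mu_i$), and implies $\mathrm{Cov}(Z_{ij},Z_{kl})=\mathrm{Cov}(\mu_i,\mu_k)$ for $i\neq k$ and $\mathrm{Cov}(Z_{ij},Z_{il})=\mathrm{Var}(\mu_i)$ for $j\ne l$. *)

(* Defs.v *)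
From HB Require Import structures.
From mathcomp Require Import all_boot all_order all_algebra.
From mathcomp Require Import boolp.
Set Implicit Arguments. Unset Strict Implicit. Unset Printing Implicit Defensive.
Import GRing.Theory Num.Theory.
Local Open Scope ring_scope.

(* Moore--Penrose generalised inverse: the (unique) B satisfying the four
   Penrose equations (real matrices, so transpose = adjoint). *)
Definition penrose (R : realFieldType) (p q : nat) (A : 'M[R]_(p, q))
    (B : 'M[R]_(q, p)) : Prop :=
  [/\ A *m B *m A = A, B *m A *m B = B,
      (A *m B)^T = A *m B & (B *m A)^T = B *m A].

Definition pinv (R : realFieldType) (p q : nat) (A : 'M[R]_(p, q)) : 'M[R]_(q, p) :=
  match pselect (exists B, penrose A B) with
  | left h => proj1_sig (cid h)
  | right _ => 0
  end.

(* Second-order (Bayes linear) belief specification: random quantities form a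
   real vector space Q containing the unit (constant) quantity [one];
   [Pr] is the prevision (expectation) and [PP x y] is the prevision P(xy) of
   products. *)
Record prevision_space (R : realFieldType) (Q : lmodType R) (one : Q)
    (Pr : Q -> R) (PP : Q -> Q -> R) : Prop := {
  Pr_lin : forall (a : R) (x y : Q), Pr (a *: x + y) = a * Pr x + Pr y;
  Pr_one : Pr one = 1;
  PP_linl : forall (a : R) (x y z : Q), PP (a *: x + y) z = a * PP x z + PP y z;
  PP_sym : forall x y, PP x y = PP y x;
  PP_one : forall x, PP one x = Pr x;
  PP_sq_ge0 : forall x, 0 <= PP x x }.

Section BayesLinear.
Variables (R : realFieldType) (Q : lmodType R) (one : Q)
  (Pr : Q -> R) (PP : Q -> Q -> R).

Definition cov (x y : Q) : R := PP x y - Pr x * Pr y.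

(* A random vector is a finite family X : T -> Q of random quantities
   (T a finite index type); it is stacked into coordinates 'I_#|T| via enum. *)
Definition Pvec (T : finType) (X : T -> Q) : 'cV[R]_#|T| :=
  \col_a Pr (X (enum_val a)).

Definition Cov (S T : finType) (X : S -> Q) (Y : T -> Q) : 'M[R]_(#|S|, #|T|) :=
  \matrix_(a, b) cov (X (enum_val a)) (Y (enum_val b)).

Definition adj_exp (S T : finType) (X : S -> Q) (W : T -> Q) : S -> Q :=
  let K := Cov X W *m pinv (Cov W W) in
  fun s => Pr (X s) *: one
           + \sum_(b < #|T|) K (enum_rank s) b *: (W (enum_val b) - Pr (W (enum_val b)) *: one).

End BayesLinear.

(* Main.v *)
Require Import Defs.
From HB Require Import structures.
From mathcomp Require Import all_boot all_order all_algebra.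
From mathcomp Require Import boolp reals.
Import GRing.Theory Num.Theory.
Local Open Scope ring_scope.

Lemma penrose_uniq (R : realFieldType) p q (A : 'M[R]_(p,q)) B1 B2 :
  penrose A B1 -> penrose A B2 -> B1 = B2.
Proof.
case=> [a1 b1 c1 d1] [a2 b2 c2 d2].
have e1 : B1 = B1 *m A *m B2.
  rewrite {1}(_ : B1 = B1 *m B1^T *m A^T); last first.
    by rewrite -mulmxA -(trmx_mul A B1) c1 mulmxA b1.
  rewrite -{1}a2 (trmx_mul (A *m B2) A) (trmx_mul A B2).
  rewrite !mulmxA -(mulmxA B1) -(trmx_mul A B1) c1.
  rewrite -(mulmxA _ B2^T) -(trmx_mul A B2) c2.
  by rewrite !mulmxA b1.
have e2 : B2 = B1 *m A *m B2.
  rewrite {1}(_ : B2 = A^T *m B2^T *m B2); last first.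
    by rewrite -(trmx_mul B2 A) d2 b2.
  rewrite -{1}a1 (trmx_mul (A *m B1) A) (trmx_mul A B1).
  rewrite mulmxA -(trmx_mul B1 A) d1.
  rewrite -(mulmxA _ A^T) -(trmx_mul B2 A) d2.
  by rewrite -!mulmxA (mulmxA B2) b2.
by rewrite {1}e1 -e2.
Qed.

Lemma penrose_tr (R : realFieldType) p q (A : 'M[R]_(p,q)) B :
  penrose A B -> penrose A^T B^T.
Proof.
case=> [a b c d]; split.
- by rewrite -!trmx_mul mulmxA a.
- by rewrite -!trmx_mul mulmxA b.
- by rewrite -trmx_mul d.
- by rewrite -trmx_mul c.
Qed.

Lemma rv_sq_eq0 (R : realFieldType) k (u : 'rV[R]_k) :
  (u *m u^T) 0 0 = 0 -> u = 0.
Proof.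
rewrite mxE => h.
have h' : \sum_(j < k) u 0 j ^+ 2 = 0.
  by rewrite -[RHS]h; apply: eq_bigr => i _; rewrite mxE expr2.
have h2 := psumr_eq0P (fun j _ => sqr_ge0 (u 0 j)) h'.
apply/rowP => j; rewrite mxE.
by apply/eqP; rewrite -sqrf_eq0; apply/eqP; rewrite h2.
Qed.

Lemma penrose_fact (R : realFieldType) p q r (F : 'M[R]_(p,r)) (G : 'M[R]_(r,q)) :
  F^T *m F \in unitmx -> G *m G^T \in unitmx ->
  penrose (F *m G) (G^T *m invmx (G *m G^T) *m invmx (F^T *m F) *m F^T).
Proof.
move=> uF uG.
set Gi := invmx (G *m G^T); set Fi := invmx (F^T *m F).
have kG : forall k (X : 'M_(k, r)), X *m G *m G^T *m Gi = X.
  by move=> k X; rewrite -2!mulmxA (mulmxA G) mulmxV // mulmx1.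
have kF : forall k (X : 'M_(k, r)), X *m Fi *m F^T *m F = X.
  by move=> k X; rewrite -2!mulmxA mulVmx // mulmx1.
have tF : Fi^T = Fi by rewrite /Fi trmx_inv (trmx_mul F^T F) trmxK.
have tG : Gi^T = Gi by rewrite /Gi trmx_inv (trmx_mul G G^T) trmxK.
split.
- by rewrite !mulmxA kG kF.
- by rewrite !mulmxA kF kG.
- rewrite !mulmxA kG.
  by rewrite (trmx_mul (F *m Fi) F^T) trmxK (trmx_mul F Fi) tF mulmxA.
- rewrite !mulmxA kF.
  by rewrite (trmx_mul (G^T *m Gi) G) (trmx_mul G^T Gi) tG trmxK mulmxA.
Qed.

Lemma penrose_exists (R : realFieldType) p q (A : 'M[R]_(p,q)) :
  exists B, penrose A B.
Proof.
set F := col_base A; set G := row_base A.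
have hA : F *m G = A := mulmx_base A.
have uF : F^T *m F \in unitmx.
  rewrite -row_free_unit; apply: inj_row_free => v hv.
  have : v *m F^T = 0.
    apply: rv_sq_eq0.
    rewrite (trmx_mul v F^T) trmxK mulmxA -(mulmxA v) hv mul0mx mxE //.
  move/eqP; rewrite mulmx_free_eq0 => [/eqP //|].
  by rewrite /row_free mxrank_tr; apply: col_base_full.
have uG : G *m G^T \in unitmx.
  rewrite -row_free_unit; apply: inj_row_free => v hv.
  have : v *m G = 0.
    apply: rv_sq_eq0.
    rewrite (trmx_mul v G) mulmxA -(mulmxA v) hv mul0mx mxE //.
  move/eqP; rewrite mulmx_free_eq0 => [/eqP //|].
  exact: row_base_free.
have := @penrose_fact _ _ _ _ _ _ uF uG; rewrite hA => h; by eexists; exact: h.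
Qed.

Lemma pinv_spec (R : realFieldType) p q (A : 'M[R]_(p,q)) : penrose A (pinv A).
Proof.
rewrite /pinv; case: pselect => [h|h]; first exact: proj2_sig (cid h).
by exfalso; apply: h; apply: penrose_exists.
Qed.

Arguments pinv_spec {R p q} A.
Arguments penrose_uniq {R p q A B1 B2}.
Arguments penrose_tr {R p q A B}.

Lemma core_mx (R : realFieldType) p N (Cm : 'M[R]_(p,N)) (Wm : 'M[R]_N) :
  Wm^T = Wm ->
  (forall x : 'rV_N, (x *m Wm *m x^T) 0 0 = 0 -> x *m Wm = 0) ->
  Cm *m (Cm *m pinv Wm)^T *m pinv ((Cm *m pinv Wm) *m Wm *m (Cm *m pinv Wm)^T)
     *m (Cm *m pinv Wm) = Cm *m pinv Wm.
Proof.
move=> sW psd.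
have hB := pinv_spec Wm.
set B := pinv Wm in hB *.
have [b1 b2 b3 b4] := hB.
have sB : B^T = B.
  have h := penrose_tr hB; rewrite sW in h.
  exact: penrose_uniq h hB.
have eM : (Cm *m B) *m Wm *m (Cm *m B)^T = Cm *m B *m Cm^T.
  rewrite (trmx_mul Cm B) sB -!mulmxA; congr (_ *m _).
  by rewrite !mulmxA b2.
have eC : Cm *m (Cm *m B)^T = Cm *m B *m Cm^T.
  by rewrite (trmx_mul Cm B) sB mulmxA.
rewrite eM eC.
have hD := pinv_spec (Cm *m B *m Cm^T).
set M := Cm *m B *m Cm^T in eM hD *.
set D := pinv M in hD *.
have [d1 d2 d3 d4] := hD.
set X := M *m D - 1%:M.
have F' : M *m D *m (Cm *m B) - Cm *m B = X *m (Cm *m B).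
  by rewrite mulmxBl mul1mx.
set F := M *m D *m (Cm *m B) - Cm *m B in F' *.
suff : F = 0 by move/eqP; rewrite subr_eq0 => /eqP.
have FW : F *m Wm *m F^T = 0.
  have -> : F *m Wm *m F^T = X *m ((Cm *m B) *m Wm *m (Cm *m B)^T) *m X^T.
    by rewrite F' (trmx_mul X (Cm *m B)) !mulmxA.
  by rewrite eM /X mulmxBl d1 mul1mx subrr !mul0mx.
have FW0 : F *m Wm = 0.
  apply/row_matrixP => i; rewrite row_mul row0; apply: psd.
  transitivity ((F *m Wm *m F^T) i i); last by rewrite FW mxE.
  by rewrite -row_mul !mxE; apply: eq_bigr => j _; rewrite !mxE.
have -> : F = F *m Wm *m B.
  by rewrite {2}F' -!mulmxA (mulmxA B) b2 -F'.
by rewrite FW0 !mul0mx.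
Qed.

From mathcomp Require Import ring lra.
Lemma quad0 (R : realFieldType) (a b : R) :
  0 <= b -> (forall t : R, 0 <= t * t * b + (t * a + t * a)) -> a = 0.
Proof.
move=> b0 h.
have b1 : 0 < b + 1 by lra.
have := h (- a / (b + 1)).
set s := (b + 1)^-1.
have hs : s * (b + 1) = 1 by rewrite mulVf // lt0r_neq0.
have s0 : 0 < s by rewrite invr_gt0.
move=> h1.
have : a * a * s * (1 + s) <= 0 by nra.
move=> h2.
have : a * a <= 0.
  have ps : 0 < s * (1 + s) by nra.
  nra.
nra.
Qed.

Section Prev.
Context {R : realFieldType} {Q : lmodType R} {one : Q}
  {Pr : Q -> R} {PP : Q -> Q -> R}.
Variable HP : prevision_space one Pr PP.

Local Notation cov := (cov Pr PP).

Lemma Pr0 : Pr 0 = 0.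
Proof.
have := Pr_lin HP 1 0 0; rewrite scaler0 addr0 mul1r; lra.
Qed.

Lemma PrD x y : Pr (x + y) = Pr x + Pr y.
Proof. by have := Pr_lin HP 1 x y; rewrite scale1r mul1r. Qed.

Lemma PrZ a x : Pr (a *: x) = a * Pr x.
Proof. by have := Pr_lin HP a x 0; rewrite addr0 Pr0 addr0. Qed.

Lemma Pr_sum (I : Type) (r : seq I) (P : pred I) (F : I -> Q) :
  Pr (\sum_(i <- r | P i) F i) = \sum_(i <- r | P i) Pr (F i).
Proof. exact: (big_morph Pr PrD Pr0). Qed.

Lemma cov_linl a x y z : cov (a *: x + y) z = a * cov x z + cov y z.
Proof. rewrite /cov (PP_linl HP) (Pr_lin HP); ring. Qed.


Lemma cov_sym x y : cov x y = cov y x.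
Proof. by rewrite /cov (PP_sym HP) mulrC. Qed.

Lemma covDl x y z : cov (x + y) z = cov x z + cov y z.
Proof. by have := cov_linl 1 x y z; rewrite scale1r mul1r. Qed.

Lemma cov0l z : cov 0 z = 0.
Proof.
have := covDl 0 0 z; rewrite addr0; lra.
Qed.

Lemma covZl a x z : cov (a *: x) z = a * cov x z.
Proof. by have := cov_linl a x 0 z; rewrite addr0 cov0l addr0. Qed.

Lemma covNl x z : cov (- x) z = - cov x z.
Proof. by rewrite -scaleN1r covZl mulN1r. Qed.

Lemma covBl x y z : cov (x - y) z = cov x z - cov y z.
Proof. by rewrite covDl covNl. Qed.

Lemma cov_suml (I : Type) (r : seq I) (P : pred I) (F : I -> Q) z :
  cov (\sum_(i <- r | P i) F i) z = \sum_(i <- r | P i) cov (F i) z.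
Proof. exact: (big_morph (fun x => cov x z) (fun x y => covDl x y z) (cov0l z)). Qed.

Lemma covDr x y z : cov z (x + y) = cov z x + cov z y.
Proof. by rewrite !(cov_sym z) covDl. Qed.
Lemma covZr a x z : cov z (a *: x) = a * cov z x.
Proof. by rewrite !(cov_sym z) covZl. Qed.
Lemma covBr x y z : cov z (x - y) = cov z x - cov z y.
Proof. by rewrite !(cov_sym z) covBl. Qed.
Lemma cov_sumr (I : Type) (r : seq I) (P : pred I) (F : I -> Q) z :
  cov z (\sum_(i <- r | P i) F i) = \sum_(i <- r | P i) cov z (F i).
Proof. by rewrite cov_sym cov_suml; apply: eq_bigr => i _; rewrite cov_sym. Qed.

Lemma cov_constl c x : cov (c *: one) x = 0.
Proof. by rewrite covZl /cov (PP_one HP) (Pr_one HP) mul1r subrr mulr0. Qed.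
Lemma cov_constr c x : cov x (c *: one) = 0.
Proof. by rewrite cov_sym cov_constl. Qed.

Lemma cov_shiftl c x y : cov (x - c *: one) y = cov x y.
Proof. by rewrite covBl cov_constl subr0. Qed.
Lemma cov_shiftr c x y : cov y (x - c *: one) = cov y x.
Proof. by rewrite covBr cov_constr subr0. Qed.

Lemma cov_ge0 x : 0 <= cov x x.
Proof.
rewrite -(cov_shiftl (Pr x)) -(cov_shiftr (Pr x)).
set w := x - _.
have e : Pr w = 0.
  by rewrite /w PrD -scaleN1r !PrZ (Pr_one HP); ring.
by rewrite /cov e mulr0 subr0 (PP_sq_ge0 HP).
Qed.

Lemma cov_var0 x y : cov x x = 0 -> cov x y = 0.
Proof.
move=> hx; apply: (@quad0 _ (cov x y) (cov y y) (cov_ge0 y)) => t.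
have := cov_ge0 (t *: y + x).
rewrite cov_linl !covDr !covZr hx (cov_sym y x).
lra.
Qed.


Section Fin.
Context {T : finType}.
Implicit Types W : T -> Q.

Definition Wc W (b : 'I_#|T|) : Q := W (enum_val b) - Pr (W (enum_val b)) *: one.
Definition lc W (x : 'rV[R]_#|T|) : Q := \sum_b x 0 b *: Wc W b.
Definition rowc W (z : Q) : 'rV[R]_#|T| := \row_c cov z (W (enum_val c)).
Definition GW W (z : Q) : Q := lc W (rowc W z *m pinv (Cov Pr PP W W)).

Lemma adj_expE (S : finType) (X : S -> Q) W s :
  adj_exp one Pr PP X W s = Pr (X s) *: one + GW W (X s).
Proof.
rewrite /adj_exp /GW /lc; congr (_ + _); apply: eq_bigr => b _.
congr (_ *: _); rewrite !mxE; apply: eq_bigr => c _.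
by rewrite !mxE enum_rankK.
Qed.

Lemma Pr_Wc W b : Pr (Wc W b) = 0.
Proof. by rewrite /Wc PrD -scaleN1r !PrZ (Pr_one HP); ring. Qed.

Lemma Pr_lc W x : Pr (lc W x) = 0.
Proof. by rewrite /lc Pr_sum big1 // => b _; rewrite PrZ Pr_Wc mulr0. Qed.

Lemma cov_lcl W x z : cov (lc W x) z = \sum_b x 0 b * cov (W (enum_val b)) z.
Proof. by rewrite /lc cov_suml; apply: eq_bigr => b _; rewrite covZl cov_shiftl. Qed.

Lemma cov_lcr W x z : cov z (lc W x) = \sum_b x 0 b * cov z (W (enum_val b)).
Proof. by rewrite cov_sym cov_lcl; apply: eq_bigr => b _; rewrite cov_sym. Qed.

Lemma cov_lc_lc W x y :
  cov (lc W x) (lc W y) = (x *m Cov Pr PP W W *m y^T) 0 0.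
Proof.
rewrite cov_lcl mxE.
under eq_bigr do rewrite cov_lcr mulr_sumr.
rewrite exchange_big /=; apply: eq_bigr => c _.
rewrite !mxE mulr_suml; apply: eq_bigr => b _.
by rewrite !mxE; ring.
Qed.

Lemma lc_lin W a x y : lc W (a *: x + y) = a *: lc W x + lc W y.
Proof.
rewrite /lc scaler_sumr -big_split; apply: eq_bigr => b _.
by rewrite !mxE scalerDl scalerA.
Qed.

Lemma lc0 W : lc W 0 = 0.
Proof. by rewrite /lc big1 // => b _; rewrite mxE scale0r. Qed.

Lemma rowc_lin W a x y : rowc W (a *: x + y) = a *: rowc W x + rowc W y.
Proof. by apply/rowP => c; rewrite !mxE cov_linl. Qed.

Lemma GW_lin W a x y : GW W (a *: x + y) = a *: GW W x + GW W y.
Proof. by rewrite /GW rowc_lin mulmxDl -scalemxAl lc_lin. Qed.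

Lemma GW0 W z : (forall t, cov z (W t) = 0) -> GW W z = 0.
Proof.
move=> h; rewrite /GW (_ : rowc W z = 0) ?mul0mx ?lc0 //.
by apply/rowP => c; rewrite !mxE h.
Qed.

Lemma GW_sum W (I : finType) (L : I -> R) (Y : I -> Q) u :
  GW W (\sum_i L i *: Y i + u) = \sum_i L i *: GW W (Y i) + GW W u.
Proof.
elim/big_rec2: _ => [|i y1 y2 _ IH]; first by rewrite !add0r.
by rewrite -addrA GW_lin IH addrA.
Qed.

End Fin.

Lemma adj_lin (S I T : finType) (X : S -> Q) (Y : I -> Q) (U : S -> Q)
    (L : S -> I -> R) (W : T -> Q) :
  (forall s, X s = \sum_i L s i *: Y i + U s) ->
  (forall s t, cov (U s) (W t) = 0) ->
  forall s, adj_exp one Pr PP X W s =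
            \sum_i L s i *: adj_exp one Pr PP Y W i + Pr (U s) *: one.
Proof.
move=> hX hU s.
rewrite adj_expE hX GW_sum (@GW0 T W (U s) (hU s)) addr0 PrD Pr_sum.
under [in RHS]eq_bigr do rewrite adj_expE scalerDr scalerA.
rewrite big_split /= scalerDl scaler_suml.
rewrite (eq_bigr (fun i => (L s i * Pr (Y i)) *: one)); last by move=> i _; rewrite PrZ.
by rewrite addrAC.
Qed.

Lemma adj_idem (S T : finType) (Y : S -> Q) (W : T -> Q) s :
  GW (adj_exp one Pr PP Y W) (Y s) = GW W (Y s).
Proof.
set Cm := Cov Pr PP Y W; set Wm := Cov Pr PP W W; set K := Cm *m pinv Wm.
set V := adj_exp one Pr PP Y W.
have hr : forall s', rowc W (Y s') = row (enum_rank s') Cm.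
  by move=> s'; apply/rowP => c; rewrite !mxE enum_rankK.
have hV : forall s', V s' = Pr (Y s') *: one + lc W (row (enum_rank s') K).
  by move=> s'; rewrite /V adj_expE /GW hr /K row_mul.
have hWc : forall a, Wc V a = lc W (row a K).
  move=> a; rewrite /Wc hV enum_valK PrD PrZ (Pr_one HP) Pr_lc mulr1 addr0.
  by rewrite addrAC subrr add0r.
have hCV : Cov Pr PP V V = K *m Wm *m K^T.
  apply/matrixP => a a'.
  transitivity (cov (Wc V a) (Wc V a')); first by rewrite mxE /Wc cov_shiftl cov_shiftr.
  rewrite !hWc cov_lc_lc -row_mul !mxE; apply: eq_bigr => j _; rewrite !mxE.
  by [].
have hrow : rowc V (Y s) = row (enum_rank s) (Cm *m K^T).
  apply/rowP => c.
  transitivity (cov (Y s) (Wc V c)); first by rewrite /Wc cov_shiftr mxE.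
  rewrite hWc cov_lcr !mxE; apply: eq_bigr => b _; rewrite !mxE enum_rankK.
  by rewrite mulrC.
have lcV : forall y, lc V y = lc W (y *m K).
  move=> y; rewrite /lc.
  under eq_bigr do rewrite hWc /lc scaler_sumr.
  rewrite exchange_big; apply: eq_bigr => b _; rewrite mxE scaler_suml.
  by apply: eq_bigr => a _; rewrite !mxE scalerA.
have sW : Wm^T = Wm by apply/matrixP => i j; rewrite !mxE cov_sym.
have psd : forall x : 'rV_#|T|, (x *m Wm *m x^T) 0 0 = 0 -> x *m Wm = 0.
  move=> x hx; rewrite -cov_lc_lc in hx; apply/rowP => c.
  rewrite [RHS]mxE.
  transitivity (cov (lc W x) (W (enum_val c))); last exact: cov_var0 hx.
  by rewrite cov_lcl mxE; apply: eq_bigr => b _; rewrite mxE.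
rewrite /GW hrow hCV lcV -!row_mul /K core_mx // hr.
by rewrite row_mul.
Qed.

End Prev.

Theorem lemma3p1 (R : realType) (Q : lmodType R) (one : Q)
  (Pr : Q -> R) (PP : Q -> Q -> R)
  (m d : nat) (n : 'I_m -> nat)
  (mu : 'I_m -> 'I_d -> Q)
  (Res : {i : 'I_m & 'I_(n i)} -> 'I_d -> Q)
  (Z : {i : 'I_m & 'I_(n i)} -> 'I_d -> Q)
  (A : 'I_m -> 'M[R]_d) (U X : 'I_d -> Q) :
  prevision_space one Pr PP ->
  (0 < m)%N -> (forall i, 0 < n i)%N ->
  (* Z_ij = mu_i + R_ij *)
  (forall k a, Z k a = mu (tag k) a + Res k a) ->
  (* P(R_ij) = 0 *)
  (forall k a, Pr (Res k a) = 0) ->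
  (* R_ij uncorrelated with every mu_k *)
  (forall k a i b, cov Pr PP (Res k a) (mu i b) = 0) ->
  (* R_ij, R_kl uncorrelated for (i,j) <> (k,l) *)
  (forall k k' a b, k <> k' -> cov Pr PP (Res k a) (Res k' b) = 0) ->
  (* Var(R_ij) does not depend on j *)
  (forall i (j j' : 'I_(n i)) a b,
      cov Pr PP (Res (existT _ i j) a) (Res (existT _ i j) b)
      = cov Pr PP (Res (existT _ i j') a) (Res (existT _ i j') b)) ->
  (* U uncorrelated with all elements of all mu_i and all R_ij *)
  (forall a i b, cov Pr PP (U a) (mu i b) = 0) ->
  (forall a k b, cov Pr PP (U a) (Res k b) = 0) ->
  (* X = sum_i A_i mu_i + U *)
  (forall a, X a = \sum_(i < m) \sum_(c < d) A i a c *: mu i c + U a) ->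
  let Zs := fun p : {i : 'I_m & 'I_(n i)} * 'I_d => Z p.1 p.2 in
  let mus := fun p : 'I_m * 'I_d => mu p.1 p.2 in
  let PZmu := adj_exp one Pr PP mus Zs in
  adj_exp one Pr PP X Zs = adj_exp one Pr PP X PZmu /\
  adj_exp one Pr PP X Zs =
    (fun a => \sum_(i < m) \sum_(c < d) A i a c *: PZmu (i, c) + Pr (U a) *: one).
Proof.
move=> HP _ _ hZ _ _ _ _ hUm hUR hX Zs mus PZmu.
pose L := fun (a : 'I_d) (p : 'I_m * 'I_d) => A p.1 a p.2.
have hX' : forall a, X a = \sum_p L a p *: mus p + U a.
  by move=> a; rewrite hX pair_big.
have hUZ : forall a t, cov Pr PP (U a) (Zs t) = 0.
  by move=> a t; rewrite /Zs hZ (covDr HP) hUm hUR addr0.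
have hUP : forall a t, cov Pr PP (U a) (PZmu t) = 0.
  move=> a t; rewrite /PZmu adj_expE (covDr HP) (cov_constr HP) add0r.
  by rewrite /GW (cov_lcr HP) big1 // => b _; rewrite hUZ mulr0.
have E1 := @adj_lin _ _ _ _ _ HP _ _ _ _ _ _ _ _ hX' hUZ.
have E2 := @adj_lin _ _ _ _ _ HP _ _ _ _ _ _ _ _ hX' hUP.
have Eid : forall p, adj_exp one Pr PP mus PZmu p = PZmu p.
  by move=> p; rewrite adj_expE (adj_idem HP) -adj_expE.
split; apply: funext => a.
  by rewrite E1 E2; under [in RHS]eq_bigr do rewrite Eid.
rewrite E1 pair_big; congr (_ + _); by apply: eq_bigr => -[i c] _.
Qed.
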